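(* Let $c>1$ be a constant. There is a constant $d$ (depending only on $c$) such that for every convex $c$-fat polygon $P$ and every line $M$ cutting $P$ at two points $a$ and $b$ of its boundary, the length $s$ of the shorter of the two parts of the perimeter of $P$ between $a$ and $b$ satisfies $s\le d\cdot|ab|$.
   Context: A polygon is $c$-fat if the ratio of the radius of the smallest disc containing it to the radius of the largest disc contained in it is at most $c$. $|ab|$ denotes the Euclidean distance between $a$ and $b$. *)

(* Defs.v *)
From HB Require Import structures.
From mathcomp Require Import all_boot all_order all_algebra.
From mathcomp Require Import boolp classical_sets reals.
Set Implicit Arguments. Unset Strict Implicit. Unset Printing Implicit Defensive.
Import Order.TTheory GRing.Theory Num.Theory.
Local Open Scope ring_scope.
Local Open Scope classical_set_scope.

Section Plane.
Variable R : realType.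
Definition pt := (R * R)%type.

Definition dist (a b : pt) : R :=
  Num.sqrt ((a.1 - b.1) ^+ 2 + (a.2 - b.2) ^+ 2).

(* twice the signed area of triangle abc; > 0 iff a,b,c is a left turn *)
Definition orient (a b c : pt) : R :=
  (b.1 - a.1) * (c.2 - a.2) - (b.2 - a.2) * (c.1 - a.1).

(* A polygon is given by its list of vertices V = [v_0; ...; v_{n-1}];
   indices are taken cyclically modulo n. *)
Definition vtx (V : seq pt) (k : nat) : pt := nth (0, 0) V (k %% size V).

(* V lists (at least 3) vertices of a convex polygon in counterclockwise
   order: every vertex other than the endpoints of edge [v_k, v_{k+1}] lies
   strictly to the left of that edge. *)
Definition convex_polygon (V : seq pt) : Prop :=
  (3 <= size V)%N /\
  forall k m, (k < size V)%N -> (m < size V)%N ->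
    m != k -> m != (k.+1 %% size V)%N ->
    0 < orient (vtx V k) (vtx V k.+1) (vtx V m).

Definition polygon_region (V : seq pt) : set pt :=
  [set x | forall k, (k < size V)%N -> 0 <= orient (vtx V k) (vtx V k.+1) x].

Definition on_seg (p q x : pt) : Prop :=
  exists t : R, 0 <= t <= 1 /\ x = (p.1 + t * (q.1 - p.1), p.2 + t * (q.2 - p.2)).

Definition on_edge (V : seq pt) (k : nat) (x : pt) : Prop :=
  on_seg (vtx V k) (vtx V k.+1) x.

Definition polygon_boundary (V : seq pt) : set pt :=
  [set x | exists2 k, (k < size V)%N & on_edge V k x].

Definition line (p u : pt) : set pt :=
  [set x | exists t : R, x = (p.1 + t * u.1, p.2 + t * u.2)].

(* Length of the part of the perimeter going counterclockwise from the
   point a (lying on edge i) to the point b (lying on edge j), i <> j: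
   a -> v_{i+1} -> ... -> v_j -> b. *)
Definition perim_arc (V : seq pt) (i : nat) (a : pt) (j : nat) (b : pt) : R :=
  let n := size V in
  let m := ((j + n - i) %% n)%N in
  dist a (vtx V i.+1)
  + \sum_(1 <= k < m) dist (vtx V (i + k)) (vtx V (i + k).+1)
  + dist (vtx V j) b.

Definition disc (o : pt) (r : R) : set pt := [set x | dist x o <= r].

Definition outer_radius (V : seq pt) : R :=
  inf [set r : R | exists o : pt, polygon_region V `<=` disc o r].

Definition inner_radius (V : seq pt) : R :=
  sup [set r : R | 0 <= r /\ exists o : pt, disc o r `<=` polygon_region V].

Definition fat (c : R) (V : seq pt) : Prop :=
  outer_radius V / inner_radius V <= c.

End Plane.

(* Main.v *)
Require Import Defs.
From HB Require Import structures.
From mathcomp Require Import all_boot all_order all_algebra.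
From mathcomp Require Import boolp classical_sets reals.
From mathcomp Require Import ring lra zify.
Import Order.TTheory GRing.Theory Num.Theory.
Local Open Scope ring_scope.
Local Open Scope classical_set_scope.

Section Geo.
Variable R : realType.
Implicit Types (a b c : pt R).

Lemma sqrt_le_sq (A B : R) : 0 <= B -> A <= B ^+ 2 -> Num.sqrt A <= B.
Proof.
move=> hB hA; apply: (le_trans (y := Num.sqrt (B ^+ 2))).
  by rewrite ler_sqrt // sqr_ge0.
by rewrite sqrtr_sqr ger0_norm.
Qed.

Lemma le_sqrt_mul (X P Q : R) : 0 <= P -> 0 <= Q -> X ^+ 2 <= P * Q ->
  X <= Num.sqrt P * Num.sqrt Q.
Proof.
move=> hP hQ h; rewrite -sqrtrM //.
apply: (le_trans (ler_norm X)); rewrite -sqrtr_sqr ler_sqrt //.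
exact: mulr_ge0.
Qed.

Lemma dist_ge0 a b : 0 <= dist a b.
Proof. exact: sqrtr_ge0. Qed.

Lemma dist_sq a b : dist a b ^+ 2 = (a.1 - b.1) ^+ 2 + (a.2 - b.2) ^+ 2.
Proof. by rewrite sqr_sqrtr // addr_ge0 // sqr_ge0. Qed.

Lemma dist_sym a b : dist a b = dist b a.
Proof. by rewrite /dist; congr Num.sqrt; ring. Qed.

Lemma cs_cross (x1 x2 y1 y2 : R) :
  x1 * y2 - x2 * y1 <= Num.sqrt (x1 ^+ 2 + x2 ^+ 2) * Num.sqrt (y1 ^+ 2 + y2 ^+ 2).
Proof.
apply: le_sqrt_mul; rewrite ?addr_ge0 ?sqr_ge0 //.
have -> : (x1 ^+ 2 + x2 ^+ 2) * (y1 ^+ 2 + y2 ^+ 2) =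
  (x1 * y2 - x2 * y1) ^+ 2 + (x1 * y1 + x2 * y2) ^+ 2 by ring.
by rewrite lerDl sqr_ge0.
Qed.

Lemma cs_dot (x1 x2 y1 y2 : R) :
  x1 * y1 + x2 * y2 <= Num.sqrt (x1 ^+ 2 + x2 ^+ 2) * Num.sqrt (y1 ^+ 2 + y2 ^+ 2).
Proof.
apply: le_sqrt_mul; rewrite ?addr_ge0 ?sqr_ge0 //.
have -> : (x1 ^+ 2 + x2 ^+ 2) * (y1 ^+ 2 + y2 ^+ 2) =
  (x1 * y2 - x2 * y1) ^+ 2 + (x1 * y1 + x2 * y2) ^+ 2 by ring.
by rewrite lerDr sqr_ge0.
Qed.

Lemma dist_tri a b c : dist a c <= dist a b + dist b c.
Proof.
apply: sqrt_le_sq; first by rewrite addr_ge0 ?dist_ge0.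
have h := cs_dot (a.1 - b.1) (a.2 - b.2) (b.1 - c.1) (b.2 - c.2).
have e1 := dist_sq a b; have e2 := dist_sq b c.
rewrite /dist in h e1 e2 *.
set d1 := Num.sqrt _ in h e1 *; set d2 := Num.sqrt _ in h e2 *.
have -> : (d1 + d2) ^+ 2 = d1 ^+ 2 + d2 ^+ 2 + 2 * (d1 * d2) by ring.
rewrite e1 e2 -subr_ge0.
set D := d1 * d2 in h *.
have -> : (a.1 - b.1) ^+ 2 + (a.2 - b.2) ^+ 2 + ((b.1 - c.1) ^+ 2 + (b.2 - c.2) ^+ 2) +
   2 * D - ((a.1 - c.1) ^+ 2 + (a.2 - c.2) ^+ 2) =
   2 * (D - ((a.1 - b.1) * (b.1 - c.1) + (a.2 - b.2) * (b.2 - c.2))) by ring.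
by apply: mulr_ge0 => //; rewrite subr_ge0.
Qed.


Lemma plucker (p0 p1 pl pm pm1 : pt R) :
  orient p0 p1 pm * orient p0 pl pm1 =
  orient p0 p1 pl * orient p0 pm pm1 + orient p0 p1 pm1 * orient p0 pl pm.
Proof. rewrite /orient; ring. Qed.

Lemma orient_cyc a b c : orient a b c = orient b c a.
Proof. rewrite /orient; ring. Qed.

Lemma orient_swap a b c : orient a b c = - orient a c b.
Proof. rewrite /orient; ring. Qed.

Lemma orient_aba a b : orient a b a = 0.
Proof. rewrite /orient; ring. Qed.
Lemma orient_abb a b : orient a b b = 0.
Proof. rewrite /orient; ring. Qed.
Lemma orient_aab a b : orient a a b = 0.
Proof. rewrite /orient; ring. Qed.

Definition Yf (u z w : pt R) := u.1 * (z.2 - w.2) - u.2 * (z.1 - w.1).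
Definition Xf (u z w : pt R) := u.1 * (w.1 - z.1) + u.2 * (w.2 - z.2).
Definition qf (u z w : pt R) := Xf u z w / Yf u z w.
Definition nu (u : pt R) := u.1 ^+ 2 + u.2 ^+ 2.
Definition sqd (x z : pt R) := (x.1 - z.1) ^+ 2 + (x.2 - z.2) ^+ 2.

Lemma term (u z P Q : pt R) (rho R2 : R) : 0 < nu u -> 0 <= rho ->
  rho * dist P Q <= orient P Q z -> 0 < Yf u z P -> 0 < Yf u z Q ->
  sqd P z <= R2 -> sqd Q z <= R2 ->
  rho * dist P Q <= R2 * (qf u z Q - qf u z P).
Proof.
move=> hu hr hO hP hQ sP sQ.
set O := orient P Q z in hO *.
have O0 : 0 <= O by apply: le_trans hO; apply: mulr_ge0 => //; exact: dist_ge0.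
set YP := Yf u z P in hP *; set YQ := Yf u z Q in hQ *.
set D := qf u z Q - qf u z P.
have id : nu u * O = YP * YQ * D.
  rewrite /D /qf -/YP -/YQ.
  have -> : YP * YQ * (Xf u z Q / YQ - Xf u z P / YP) = YP * Xf u z Q - YQ * Xf u z P.
    by field; rewrite (gt_eqF hP) (gt_eqF hQ).
  by rewrite /O /YP /YQ /nu /Yf /Xf /orient; ring.
have lP : YP ^+ 2 <= nu u * R2.
  apply: (le_trans (y := nu u * sqd P z)); last by apply: ler_wpM2l => //; exact: ltW.
  have -> : nu u * sqd P z = YP ^+ 2 + (Xf u z P) ^+ 2.
    by rewrite /nu /sqd /YP /Yf /Xf; ring.
  by rewrite lerDl sqr_ge0.
have lQ : YQ ^+ 2 <= nu u * R2.
  apply: (le_trans (y := nu u * sqd Q z)); last by apply: ler_wpM2l => //; exact: ltW.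
  have -> : nu u * sqd Q z = YQ ^+ 2 + (Xf u z Q) ^+ 2.
    by rewrite /nu /sqd /YQ /Yf /Xf; ring.
  by rewrite lerDl sqr_ge0.
have lPQ : YP * YQ <= nu u * R2.
  have : 0 <= (YP - YQ) ^+ 2 by apply: sqr_ge0.
  rewrite sqrrB => h; lra.
have YY : 0 < YP * YQ by apply: mulr_gt0.
have D0 : 0 <= D.
  by rewrite -(pmulr_rge0 _ YY) -id; apply: mulr_ge0 => //; exact: ltW.
apply: (le_trans hO).
rewrite -(ler_pM2l hu) id mulrA.
by apply: ler_wpM2r.
Qed.

Lemma fin_min (N : nat) (F : nat -> R) : (forall k, (k < N)%N -> 0 < F k) ->
  exists2 d, 0 < d & forall k, (k < N)%N -> d <= F k.
Proof.
elim: N => [|N IH] h; first by exists 1 => //.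
have [d d0 hd] := IH (fun k hk => h k (ltnW hk)).
have hN := h N (ltnSn N).
exists (Num.min d (F N)); first by rewrite lt_min d0 hN.
move=> k; rewrite ltnS leq_eqVlt => /orP [/eqP ->|hk].
  by rewrite ge_min lexx orbT.
by rewrite ge_min hd.
Qed.

Lemma term_le_sum (N : nat) (F : nat -> R) k : (forall k, (k < N)%N -> 0 <= F k) ->
  (k < N)%N -> F k <= \sum_(0 <= i < N) F i.
Proof.
elim: N => [//|N IH] h hk.
rewrite big_nat_recr //=.
move: hk; rewrite ltnS leq_eqVlt => /orP [/eqP ->|hk].
  rewrite lerDr big_nat_cond; apply: sumr_ge0 => i /andP [/andP [_ hi] _].
  by apply: h; apply: ltnW.
have := IH (fun k hk => h k (ltnW hk)) hk.
move=> h1; apply: (le_trans h1); rewrite lerDl; exact: h.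
Qed.

Lemma mid_eq (a b : pt R) : ((a.1 + b.1) / 2, (a.2 + b.2) / 2) = a \/
   ((a.1 + b.1) / 2, (a.2 + b.2) / 2) = b -> a = b.
Proof.
case: a b => a1 a2 [b1 b2] /= [] [e1 e2].
  have h1 : b1 = a1 by lra.
  have h2 : b2 = a2 by lra.
  by rewrite h1 h2.
have h1 : a1 = b1 by lra.
have h2 : a2 = b2 by lra.
by rewrite h1 h2.
Qed.

Lemma final_ineq (c r R1 L A : R) : 0 < c -> 0 < r -> R1 <= 2 * (c + 1) * r -> 0 <= L ->
  0 <= R1 -> (r / 2) ^+ 2 * A <= (2 * R1) ^+ 2 * L -> A <= 64 * (c + 1) ^+ 2 * L.
Proof.
move=> c0 r0 hR L0 R0 h.
have q0 : 0 < (r / 2) ^+ 2 by apply: exprn_gt0; apply: divr_gt0.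
rewrite -(ler_pM2l q0); apply: (le_trans h).
have : (2 * R1) ^+ 2 <= (2 * (2 * (c + 1) * r)) ^+ 2.
  rewrite ler_pXn2r // ?nnegrE; [lra | lra | ].
  by apply: mulr_ge0; [lra|apply: mulr_ge0; [lra | exact: ltW]].
move=> h2.
have -> : (r / 2) ^+ 2 * (64 * (c + 1) ^+ 2 * L) = (2 * (2 * (c + 1) * r)) ^+ 2 * L by field.
exact: ler_wpM2r.
Qed.

Section Poly.
Variable V : seq (pt R).
Local Notation n := (size V).
Local Notation v := (vtx V).

Lemma vtx_mod k : v (k %% n)%N = v k.
Proof. by rewrite /vtx modn_mod. Qed.

Lemma vtxS_mod k : v (k %% n)%N.+1 = v k.+1.
Proof. by rewrite /vtx -addn1 modnDml addn1. Qed.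

Lemma vtx_addn k : v (k + n) = v k.
Proof. by rewrite /vtx modnDr. Qed.

Lemma modneq2 (b x y : nat) : (x < n)%N -> (y < n)%N -> x != y -> ((b + x) %% n != (b + y) %% n)%N.
Proof.
move=> hx hy hxy; apply/negP => /eqP h.
have : (x == y %[mod n]) by rewrite -(eqn_modDl b) h.
by rewrite !modn_small // (negbTE hxy).
Qed.

Hypothesis hconv : convex_polygon V.

Lemma n_ge3 : (3 <= n)%N.
Proof. by case: hconv. Qed.

Lemma n_gt0 : (0 < n)%N.
Proof. by apply: leq_trans n_ge3. Qed.

Lemma conv_gen (K M : nat) : (M %% n != K %% n)%N -> (M %% n != K.+1 %% n)%N ->
  0 < orient (v K) (v K.+1) (v M).
Proof.
move=> h1 h2; rewrite -vtx_mod -vtxS_mod -(vtx_mod M).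
apply: hconv.2; rewrite ?ltn_pmod ?n_gt0 //.
by rewrite -addn1 modnDml addn1.
Qed.

Lemma conv_off (b x y : nat) : (x < n)%N -> (y < n)%N -> x != y -> (x != y.+1 %% n)%N ->
  0 < orient (v (b + y)) (v (b + y).+1) (v (b + x)).
Proof.
move=> hx hy hxy hxy1; apply: conv_gen; first exact: modneq2.
rewrite -addnS -[X in _ != X]modnDmr; apply: modneq2 => //; by rewrite ltn_pmod // n_gt0.
Qed.

Lemma L3 (b l m : nat) : (0 < l)%N -> (l < m)%N -> (m < n)%N ->
  0 < orient (v b) (v (b + l)) (v (b + m)).
Proof.
move=> hl hlm hmn.
have E : forall y, (0 < y)%N -> (y.+1 < n)%N -> 0 < orient (v b) (v (b + y)) (v (b + y.+1)).
  move=> y hy hy1; rewrite orient_cyc addnS.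
  rewrite -[v b](congr1 v (addn0 b)).
  apply: conv_off; rewrite ?n_gt0 ?modn_small //; try (by apply: ltnW).
    by rewrite eq_sym -lt0n.
have F : forall y, (1 < y)%N -> (y < n)%N -> 0 < orient (v b) (v b.+1) (v (b + y)).
  move=> y hy hyn.
  have -> : v b = v (b + 0) by rewrite addn0.
  have -> : v b.+1 = v (b + 0).+1 by rewrite addn0.
  apply: conv_off; rewrite ?n_gt0 ?modn_small //.
  - by rewrite -lt0n; apply: ltn_trans hy.
  - by rewrite neq_ltn hy orbT.
  - by apply: leq_trans n_ge3.
have F0 : forall y, (0 < y)%N -> (y < n)%N -> 0 <= orient (v b) (v b.+1) (v (b + y)).
  move=> y hy hyn; have [e|ne] := eqVneq y 1%N.
    by rewrite e addn1 orient_abb.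
  apply/ltW/F => //; by rewrite ltn_neqAle eq_sym ne hy.
elim: m hlm hmn => [//|m IH] hlm hmn.
case: (ltngtP l m) => h.
- have hP := IH h (ltnW hmn).
  have hm : (0 < m)%N by lia.
  have hFm : 0 < orient (v b) (v b.+1) (v (b + m)) by apply: F; lia.
  have hFm1 : 0 < orient (v b) (v b.+1) (v (b + m.+1)) by apply: F; lia.
  have hE := E m hm hmn.
  have hFl : 0 <= orient (v b) (v b.+1) (v (b + l)) by apply: F0; lia.
  have := plucker (v b) (v b.+1) (v (b + l)) (v (b + m)) (v (b + m.+1)).
  move=> eq.
  rewrite -(pmulr_rgt0 _ hFm) eq.
  have t1 := mulr_gt0 hFm1 hP; have t2 := mulr_ge0 hFl (ltW hE); lra.
- by move: hlm; rewrite ltnS leqNgt h.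
- by rewrite h; apply: E => //; rewrite -h.
Qed.

Lemma L3' (i al be ga : nat) : (al <= be)%N -> (be <= ga)%N -> (ga <= n)%N ->
  0 <= orient (v (i + al)) (v (i + be)) (v (i + ga)).
Proof.
move=> h1 h2 h3.
have [e|ne] := eqVneq al be; first by rewrite e orient_aab.
have [e|ne2] := eqVneq be ga; first by rewrite e orient_abb.
have [[e0 en]|hne] : ((al = 0)%N /\ ga = n) \/ ~ ((al = 0)%N /\ ga = n).
  by case: (al =P 0)%N; case: (ga =P n); tauto.
  by rewrite e0 en addn0 vtx_addn orient_aba.
apply/ltW.
have -> : (i + be = (i + al) + (be - al))%N by lia.
have -> : (i + ga = (i + al) + (ga - al))%N by lia.
apply: L3; lia.
Qed.

Definition seg_pt (p q : pt R) (t : R) : pt R :=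
  (p.1 + t * (q.1 - p.1), p.2 + t * (q.2 - p.2)).

Lemma biaff (A0 A1 B0 B1 w : pt R) (s t : R) :
  orient (seg_pt A0 A1 s) (seg_pt B0 B1 t) w =
  (1 - s) * (1 - t) * orient A0 B0 w + (1 - s) * t * orient A0 B1 w +
  s * (1 - t) * orient A1 B0 w + s * t * orient A1 B1 w.
Proof. rewrite /orient /seg_pt /=; ring. Qed.

Lemma on_edgeP k x : on_edge V k x -> exists2 s, 0 <= s <= 1 & x = seg_pt (v k) (v k.+1) s.
Proof. by case=> s [hs ->]; exists s. Qed.

Definition moff (i j : nat) := ((j + n - i) %% n)%N.

Lemma moff_prop (i j : nat) : (i < n)%N -> (j < n)%N -> i != j ->
  [/\ (0 < moff i j)%N, (moff i j < n)%N & ((i + moff i j) %% n = j)%N].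
Proof.
move=> hi hj hij; rewrite /moff.
case: (ltngtP i j) => h.
- have -> : (j + n - i = (j - i) + n)%N by lia.
  rewrite modnDr modn_small; last by lia.
  have -> : (i + (j - i) = j)%N by lia.
  split; rewrite ?modn_small //; lia.
- rewrite modn_small; last by lia.
  have -> : (i + (j + n - i) = j + n)%N by lia.
  split; rewrite ?modnDr ?modn_small //; lia.
- by move: hij; rewrite h eqxx.
Qed.

Lemma side (i j : nat) a b k : (i < n)%N -> (j < n)%N -> i != j ->
  on_edge V i a -> on_edge V j b -> (1 <= k <= moff i j)%N ->
  orient a b (v (i + k)) <= 0.
Proof.
move=> hi hj hij /on_edgeP [s hs ->] /on_edgeP [t ht ->] hk.
have [m0 mn mj] := moff_prop i j hi hj hij.
set m := moff i j in m0 mn mj hk.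
have ej : v j = v (i + m) by rewrite -[v (i + m)]vtx_mod mj.
have ej1 : v j.+1 = v (i + m.+1) by rewrite addnS -[v (i + m).+1]vtxS_mod mj.
rewrite biaff ej ej1.
have -> : v i = v (i + 0) by rewrite addn0.
have -> : v i.+1 = v (i + 1) by rewrite addn1.
have O : forall al ga, (al <= 1)%N -> (m <= ga <= m.+1)%N ->
    orient (v (i + al)) (v (i + ga)) (v (i + k)) <= 0.
  move=> al ga h1 h2; rewrite orient_swap oppr_le0; apply: L3'; lia.
have O1 : orient (v (i + 0)) (v (i + m)) (v (i + k)) <= 0 by apply: O; lia.
have O2 : orient (v (i + 0)) (v (i + m.+1)) (v (i + k)) <= 0 by apply: O; lia.
have O3 : orient (v (i + 1)) (v (i + m)) (v (i + k)) <= 0 by apply: O; lia.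
have O4 : orient (v (i + 1)) (v (i + m.+1)) (v (i + k)) <= 0 by apply: O; lia.
case/andP: hs => s0 s1; case/andP: ht => t0 t1.
have w1 : 0 <= (1 - s) * (1 - t) by apply: mulr_ge0; lra.
have w2 : 0 <= (1 - s) * t by apply: mulr_ge0; lra.
have w3 : 0 <= s * (1 - t) by apply: mulr_ge0; lra.
have w4 : 0 <= s * t by apply: mulr_ge0; lra.
have := mulr_ge0_le0 w1 O1; have := mulr_ge0_le0 w2 O2.
have := mulr_ge0_le0 w3 O3; have := mulr_ge0_le0 w4 O4.
lra.
Qed.

Lemma region_gen y K : polygon_region V y -> 0 <= orient (v K) (v K.+1) y.
Proof.
move=> hy; rewrite -vtx_mod -vtxS_mod; apply: hy.
by rewrite ltn_pmod // n_gt0.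
Qed.

Lemma dist_xx (x : pt R) : dist x x = 0.
Proof. by rewrite /dist !subrr expr0n /= addr0 sqrtr0. Qed.

Lemma edge_bound (z : pt R) (rho : R) : 0 < rho ->
  disc z rho `<=` polygon_region V ->
  forall K, rho * dist (v K) (v K.+1) <= orient (v K) (v K.+1) z.
Proof.
move=> hr hd K.
set L := dist (v K) (v K.+1).
have hL0 : 0 <= L := dist_ge0 _ _.
have [L0|Lpos] : L = 0 \/ 0 < L.
  by move: hL0; rewrite le_eqVlt => /orP [/eqP <-|->]; [left|right].
  rewrite L0 mulr0; apply: region_gen; apply: hd.
  by rewrite /disc /= dist_xx ltW.
set e1 := (v K.+1).1 - (v K).1; set e2 := (v K.+1).2 - (v K).2.
have hL2 : L ^+ 2 = e1 ^+ 2 + e2 ^+ 2.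
  by rewrite /L dist_sq /e1 /e2; ring.
set y : pt R := (z.1 + rho / L * e2, z.2 - rho / L * e1).
have hy : dist y z = rho.
  rewrite /dist /y /=.
  have -> : (z.1 + rho / L * e2 - z.1) ^+ 2 + (z.2 - rho / L * e1 - z.2) ^+ 2 =
     (rho / L) ^+ 2 * (e1 ^+ 2 + e2 ^+ 2) by ring.
  rewrite -hL2.
  have -> : (rho / L) ^+ 2 * L ^+ 2 = rho ^+ 2 by field; rewrite gt_eqF.
  by rewrite sqrtr_sqr ger0_norm // ltW.
have hyr : polygon_region V y by apply: hd; rewrite /disc /= hy.
have := region_gen y K hyr.
have -> : orient (v K) (v K.+1) y = orient (v K) (v K.+1) z - rho / L * (e1 ^+ 2 + e2 ^+ 2).
  by rewrite /orient /y /e1 /e2 /=; ring.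
rewrite -hL2.
have -> : rho / L * L ^+ 2 = rho * L by field; rewrite gt_eqF.
by rewrite subr_ge0.
Qed.

Lemma dist_scale (A B C D : pt R) (lam : R) : 0 <= lam ->
  A.1 - B.1 = lam * (C.1 - D.1) -> A.2 - B.2 = lam * (C.2 - D.2) ->
  dist A B = lam * dist C D.
Proof.
move=> hl h1 h2; rewrite /dist h1 h2.
have -> : (lam * (C.1 - D.1)) ^+ 2 + (lam * (C.2 - D.2)) ^+ 2 =
  lam ^+ 2 * ((C.1 - D.1) ^+ 2 + (C.2 - D.2) ^+ 2) by ring.
by rewrite sqrtrM ?sqr_ge0 // sqrtr_sqr ger0_norm.
Qed.

Lemma part_first (z : pt R) (rho : R) : 0 < rho ->
  disc z rho `<=` polygon_region V ->
  forall k a, on_edge V k a -> rho * dist a (v k.+1) <= orient a (v k.+1) z.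
Proof.
move=> hr hd k a /on_edgeP [s /andP [s0 s1] ->].
have hE := edge_bound z rho hr hd k.
rewrite (@dist_scale _ _ (v k) (v k.+1) (1 - s)); last first.
- by rewrite /seg_pt /=; ring.
- by rewrite /seg_pt /=; ring.
- by rewrite subr_ge0.
have -> : orient (seg_pt (v k) (v k.+1) s) (v k.+1) z = (1 - s) * orient (v k) (v k.+1) z.
  by rewrite /orient /seg_pt /=; ring.
rewrite mulrCA; apply: ler_wpM2l => //; by rewrite subr_ge0.
Qed.

Lemma part_last (z : pt R) (rho : R) : 0 < rho ->
  disc z rho `<=` polygon_region V ->
  forall k b, on_edge V k b -> rho * dist (v k) b <= orient (v k) b z.
Proof.
move=> hr hd k b /on_edgeP [s /andP [s0 s1] ->].
have hE := edge_bound z rho hr hd k.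
rewrite (@dist_scale _ _ (v k) (v k.+1) s) //; last first.
- by rewrite /seg_pt /=; ring.
- by rewrite /seg_pt /=; ring.
have -> : orient (v k) (seg_pt (v k) (v k.+1) s) z = s * orient (v k) (v k.+1) z.
  by rewrite /orient /seg_pt /=; ring.
rewrite mulrCA; exact: ler_wpM2l.
Qed.

Lemma vtx_in k : polygon_region V (v k).
Proof.
move=> k' hk'.
have [e|ne] := eqVneq (k %% n)%N k'.
  by rewrite -[v k]vtx_mod e orient_aba.
have [e|ne2] := eqVneq (k %% n)%N (k'.+1 %% n)%N.
  by rewrite -[v k]vtx_mod e vtx_mod orient_abb.
apply: ltW; apply: conv_gen; by rewrite ?(modn_small hk').
Qed.

Lemma seg_in k a : on_edge V k a -> polygon_region V a.
Proof.
move=> /on_edgeP [s /andP [s0 s1] ->] k' hk'.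
have h1 := vtx_in k k' hk'; have h2 := vtx_in k.+1 k' hk'.
have -> : forall P Q A B : pt R, orient P Q (seg_pt A B s) =
   (1 - s) * orient P Q A + s * orient P Q B.
  by move=> P Q A B; rewrite /orient /seg_pt /=; ring.
by apply: addr_ge0; apply: mulr_ge0 => //; rewrite subr_ge0.
Qed.

Lemma nu_pos (a b : pt R) : a != b -> 0 < nu (b.1 - a.1, b.2 - a.2).
Proof.
move=> hab; rewrite /nu /= lt_neqAle addr_ge0 ?sqr_ge0 // andbT eq_sym.
apply/negP => /eqP /eqP; rewrite paddr_eq0 ?sqr_ge0 // !sqrf_eq0 !subr_eq0.
case/andP => /eqP e1 /eqP e2; move: hab; case: a b e1 e2 => a1 a2 [b1 b2] /= -> ->.
by rewrite eqxx.
Qed.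

Lemma dist_nu (a b : pt R) : dist a b ^+ 2 = nu (b.1 - a.1, b.2 - a.2).
Proof. by rewrite dist_sq /nu /=; ring. Qed.

Lemma chain (z : pt R) (rho R2 : R) : 0 < rho -> disc z rho `<=` polygon_region V ->
  (forall x, polygon_region V x -> sqd x z <= R2) ->
  forall (i j : nat) (a b : pt R), (i < n)%N -> (j < n)%N -> i != j ->
  on_edge V i a -> on_edge V j b -> a != b -> rho * dist a b <= orient a b z ->
  rho ^+ 2 * perim_arc V i a j b <= R2 * dist a b.
Proof.
move=> hr hd hR i j a b hi hj hij ha hb hab hH.
have [m0 mn mj] := moff_prop i j hi hj hij.
set u : pt R := (b.1 - a.1, b.2 - a.2).
have hu : 0 < nu u := nu_pos a b hab.
have dpos : 0 < dist a b.
  rewrite lt_neqAle dist_ge0 andbT; apply/negP => /eqP h0.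
  by move: hu; rewrite -dist_nu -h0 expr0n ltxx.
set H := orient a b z in hH.
have Hpos : 0 < H by apply: lt_le_trans hH; apply: mulr_gt0.
have Ya : Yf u z a = H by rewrite /Yf /H /orient /u /=; ring.
have Yb : Yf u z b = H by rewrite /Yf /H /orient /u /=; ring.
have Ya' : 0 < Yf u z a by rewrite Ya.
have Yb' : 0 < Yf u z b by rewrite Yb.
have Yv : forall k, (1 <= k <= moff i j)%N -> 0 < Yf u z (v (i + k)).
  move=> k hk; have := side i j a b k hi hj hij ha hb hk.
  have -> : Yf u z (v (i + k)) = H - orient a b (v (i + k)) by rewrite /Yf /H /orient /u /=; ring.
  move=> h; lra.
have R20 : 0 <= R2 by apply: le_trans (hR z _); [rewrite /sqd !subrr expr0n /= addr0 | apply: hd; rewrite /disc /= dist_xx ltW].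
set m := moff i j in m0 mn mj Yv.
have ej : v j = v (i + m) by rewrite -[v (i + m)]vtx_mod mj.
have ei1 : v i.+1 = v (i + 1) by rewrite addn1.
set q := qf u z.
have Yi1 : 0 < Yf u z (v i.+1) by rewrite ei1; apply: Yv; rewrite m0.
have Yj : 0 < Yf u z (v j) by rewrite ej; apply: Yv; rewrite m0 leqnn.
have Sa : sqd a z <= R2 by apply: hR; exact: seg_in ha.
have Sb : sqd b z <= R2 by apply: hR; exact: seg_in hb.
have Sv : forall k, sqd (v k) z <= R2 by move=> k; apply: hR; exact: vtx_in.
have T1 : rho * dist a (v i.+1) <= R2 * (q (v i.+1) - q a).
  exact: (term u z a (v i.+1) rho R2 hu (ltW hr) (part_first z rho hr hd i a ha) Ya' Yi1 Sa (Sv _)).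
have T3 : rho * dist (v j) b <= R2 * (q b - q (v j)).
  exact: (term u z (v j) b rho R2 hu (ltW hr) (part_last z rho hr hd j b hb) Yj Yb' (Sv _) Sb).
have T2 : rho * (\sum_(1 <= k < m) dist (v (i + k)) (v (i + k).+1)) <=
    R2 * (q (v (i + m)) - q (v (i + 1))).
  have m1 : (1 <= m)%N by [].
  have tel : \sum_(1 <= k < m) (q (v (i + k.+1)) - q (v (i + k))) = q (v (i + m)) - q (v (i + 1)).
    exact: (telescope_sumr (fun k => q (v (i + k))) m1).
  rewrite -tel !mulr_sumr; apply: ler_sum_nat => k hk.
  have Y1 : 0 < Yf u z (v (i + k)) by apply: Yv; case/andP: hk => h1 h2; rewrite h1 ltnW.
  have Y2 : 0 < Yf u z (v (i + k).+1) by rewrite -addnS; apply: Yv; case/andP: hk => _ h2; rewrite h2.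
  have := term u z (v (i + k)) (v (i + k).+1) rho R2 hu (ltW hr) (edge_bound z rho hr hd _) Y1 Y2 (Sv _) (Sv _).
  by rewrite -addnS.
have Tot : rho * perim_arc V i a j b <= R2 * (q b - q a).
  have := lerD (lerD T1 T2) T3; rewrite -!mulrDr.
  have -> : q (v i.+1) - q a + (q (v (i + m)) - q (v (i + 1))) + (q b - q (v j)) = q b - q a.
    by rewrite ej ei1; ring.
  by [].
have eq : q b - q a = nu u / H.
  rewrite /q /qf Ya Yb -mulrBl; congr (_ / _).
  by rewrite /Xf /nu /u /=; ring.
rewrite eq in Tot.
rewrite expr2 -mulrA.
apply: (le_trans (ler_wpM2l (ltW hr) Tot)).
rewrite mulrCA; apply: ler_wpM2l => //.
have hn : nu u = dist a b * dist a b by rewrite -expr2 dist_nu.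
rewrite mulrA ler_pdivrMr // hn mulrA [dist a b * H]mulrC.
by apply: ler_wpM2r => //; exact: dist_ge0.
Qed.

Lemma vtx_n : v n = v 0.
Proof. by rewrite /vtx modnn mod0n. Qed.

Lemma sum_const (x y : pt R) :
  \sum_(0 <= k < n) orient (v k) (v k.+1) x = \sum_(0 <= k < n) orient (v k) (v k.+1) y.
Proof.
apply/eqP; rewrite -subr_eq0 -sumrB.
have e : forall k, orient (v k) (v k.+1) x - orient (v k) (v k.+1) y =
   (x.2 - y.2) * ((v k.+1).1 - (v k).1) - (x.1 - y.1) * ((v k.+1).2 - (v k).2).
  by move=> k; rewrite /orient; ring.
under eq_bigr do rewrite e.
rewrite sumrB -!mulr_sumr.
rewrite (telescope_sumr (fun k => (v k).1)) // (telescope_sumr (fun k => (v k).2)) //.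
by rewrite /= vtx_n !subrr !mulr0 subrr.
Qed.

Lemma region_le (x : pt R) k : polygon_region V x -> (k < n)%N ->
  orient (v k) (v k.+1) x <= \sum_(0 <= i < n) orient (v i) (v i.+1) (v 0).
Proof.
move=> hx hk; rewrite -(sum_const x).
exact: (term_le_sum n (fun i => orient (v i) (v i.+1) x) k (fun i hi => hx i hi) hk).
Qed.

Lemma region_bounded : exists o : pt R, exists R0 : R, polygon_region V `<=` disc o R0.
Proof.
set C0 := \sum_(0 <= i < n) orient (v i) (v i.+1) (v 0).
set e0 : pt R := ((v 1).1 - (v 0).1, (v 1).2 - (v 0).2).
set e1 : pt R := ((v 2).1 - (v 1).1, (v 2).2 - (v 1).2).
set D := orient (v 0) (v 1) (v 2).
have D0 : 0 < D.
  apply: conv_gen; rewrite !modn_small //; try (by apply: leq_trans n_ge3).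
exists (v 1), (Num.sqrt (2 * C0 ^+ 2 * (nu e0 + nu e1) / D ^+ 2)).
move=> x hx; rewrite /disc /= /dist.
rewrite ler_sqrt; last first.
  apply: divr_ge0; last exact: sqr_ge0.
  by apply: mulr_ge0; [apply: mulr_ge0 => //; exact: sqr_ge0 | apply: addr_ge0; apply: addr_ge0; exact: sqr_ge0].
have n1 : (1 < n)%N by apply: leq_trans n_ge3.
set al := orient (v 0) (v 1) x.
set be := orient (v 1) (v 2) x.
have a0 : 0 <= al by apply: (hx 0%N); apply: n_gt0.
have b0 : 0 <= be by apply: (hx 1%N).
have a1 : al <= C0 by apply: (region_le x 0%N hx); apply: n_gt0.
have b1 : be <= C0 by apply: (region_le x 1%N hx).
have id : D ^+ 2 * ((x.1 - (v 1).1) ^+ 2 + (x.2 - (v 1).2) ^+ 2) =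
   (al * e1.1 - be * e0.1) ^+ 2 + (al * e1.2 - be * e0.2) ^+ 2.
  by rewrite /D /al /be /e0 /e1 /orient /=; ring.
rewrite ler_pdivlMr ?exprn_gt0 // mulrC id.
have s1 : forall p q : R, (p - q) ^+ 2 <= 2 * (p ^+ 2) + 2 * (q ^+ 2).
  move=> p q; have := sqr_ge0 (p + q); rewrite sqrrD sqrrB => h; lra.
have aa : al ^+ 2 <= C0 ^+ 2 by rewrite ler_pXn2r // ?nnegrE //; apply: le_trans a1.
have bb : be ^+ 2 <= C0 ^+ 2 by rewrite ler_pXn2r // ?nnegrE //; apply: le_trans b1.
apply: (le_trans (lerD (s1 _ _) (s1 _ _))).
rewrite !exprMn /nu.
have E1 := sqr_ge0 e1.1; have E2 := sqr_ge0 e1.2; have E3 := sqr_ge0 e0.1; have E4 := sqr_ge0 e0.2.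
have := ler_wpM2r E1 aa; have := ler_wpM2r E2 aa; have := ler_wpM2r E3 bb; have := ler_wpM2r E4 bb.
lra.
Qed.

Lemma interior : exists g : pt R, exists2 eps : R, 0 < eps & disc g eps `<=` polygon_region V.
Proof.
set g : pt R := (((v 0).1 + (v 1).1 + (v 2).1) / 3%:R, ((v 0).2 + (v 1).2 + (v 2).2) / 3%:R).
have n3 := n_ge3.
have pos : forall k, (k < n)%N -> 0 < orient (v k) (v k.+1) g.
  move=> k hk.
  have -> : orient (v k) (v k.+1) g = (orient (v k) (v k.+1) (v 0) +
     orient (v k) (v k.+1) (v 1) + orient (v k) (v k.+1) (v 2)) / 3%:R.
    by rewrite /orient /g /=; field.
  apply: divr_gt0; last by rewrite ltr0n.
  have h0 := vtx_in 0 k hk; have h1 := vtx_in 1 k hk; have h2 := vtx_in 2 k hk.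
  have [e0|ne0] := eqVneq k 0%N.
    have : 0 < orient (v k) (v k.+1) (v 2).
      by apply: conv_gen; rewrite e0 !modn_small //; apply: leq_trans n3.
    move=> h; lra.
  have [e1|ne1] := eqVneq k 1%N.
    have : 0 < orient (v k) (v k.+1) (v 0).
      by apply: conv_gen; rewrite e1 !modn_small //; apply: leq_trans n3.
    move=> h; lra.
  have : 0 < orient (v k) (v k.+1) (v 1).
    apply: conv_gen; rewrite ?(modn_small (m := 1%N)) ?(modn_small hk) 1?eq_sym //; try (by apply: leq_trans n3).
    case: (ltngtP k.+1 n) => h.
    - by rewrite modn_small //; lia.
    - by move: h; rewrite ltnNge hk.
    - by rewrite h modnn.
  move=> h; lra.
have [del d0 hdel] := fin_min n (fun k => orient (v k) (v k.+1) g) pos.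
set L := 1 + \sum_(0 <= k < n) dist (v k) (v k.+1).
have hL : forall k, (k < n)%N -> dist (v k.+1) (v k) <= L.
  move=> k hk; rewrite dist_sym /L.
  have := term_le_sum n (fun k => dist (v k) (v k.+1)) k (fun i _ => dist_ge0 _ _) hk.
  move=> h; lra.
have L0 : 0 < L.
  rewrite /L; have : 0 <= \sum_(0 <= k < n) dist (v k) (v k.+1) by apply: sumr_ge0 => *; exact: dist_ge0.
  move=> h; lra.
exists g, (del / L); first exact: divr_gt0.
move=> x hx k hk.
have -> : orient (v k) (v k.+1) x = orient (v k) (v k.+1) g -
   (((v k.+1).1 - (v k).1) * (g.2 - x.2) - ((v k.+1).2 - (v k).2) * (g.1 - x.1)).
  by rewrite /orient; ring.
rewrite subr_ge0.
apply: (le_trans (cs_cross _ _ _ _)).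
rewrite -/(dist (v k.+1) (v k)) -/(dist g x) dist_sym [dist g x]dist_sym.
apply: le_trans (hdel k hk).
have hx' : dist x g <= del / L by [].
have hL' : dist (v k) (v k.+1) <= L by rewrite dist_sym; apply: hL.
apply: (le_trans (ler_pM (dist_ge0 _ _) (dist_ge0 _ _) hL' hx')).
rewrite mulrC divfK //; by rewrite (gt_eqF L0).
Qed.

Lemma disc_rad (o o' : pt R) (r R0 : R) : 0 <= r -> disc o r `<=` disc o' R0 -> r <= R0.
Proof.
move=> r0 h.
set p1 : pt R := (o.1 + r, o.2); set p2 : pt R := (o.1 - r, o.2).
have d1 : dist p1 o = r.
  rewrite /dist /p1 /=; have -> : (o.1 + r - o.1) ^+ 2 + (o.2 - o.2) ^+ 2 = r ^+ 2 by ring.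
  by rewrite sqrtr_sqr ger0_norm.
have d2 : dist p2 o = r.
  rewrite /dist /p2 /=; have -> : (o.1 - r - o.1) ^+ 2 + (o.2 - o.2) ^+ 2 = r ^+ 2 by ring.
  by rewrite sqrtr_sqr ger0_norm.
have d12 : dist p1 p2 = 2 * r.
  rewrite /dist /p1 /p2 /=; have -> : (o.1 + r - (o.1 - r)) ^+ 2 + (o.2 - o.2) ^+ 2 = (2 * r) ^+ 2 by ring.
  by rewrite sqrtr_sqr ger0_norm // mulr_ge0.
have h1 : dist p1 o' <= R0 by apply: h; rewrite /disc /= d1.
have h2 : dist p2 o' <= R0 by apply: h; rewrite /disc /= d2.
have := dist_tri p1 o' p2; rewrite d12 [dist o' p2]dist_sym => h3.
lra.
Qed.

Lemma fat_extract (c : R) : 0 < c -> fat c V ->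
  exists (o o' : pt R) (r R1 : R), [/\ 0 < r, disc o r `<=` polygon_region V,
     polygon_region V `<=` disc o' R1 & R1 <= 2 * (c + 1) * r].
Proof.
move=> c0; rewrite /fat /outer_radius /inner_radius.
set Sin := [set r : R | 0 <= r /\ exists o : pt R, disc o r `<=` polygon_region V].
set Sout := [set r : R | exists o : pt R, polygon_region V `<=` disc o r].
move=> hfat.
have [g [eps e0 hg]] := interior.
have [o' [R0 hR0]] := region_bounded.
have hsup : has_sup Sin.
  split; first by exists eps; split; [exact: ltW | exists g].
  exists R0 => r [r0 [o ho]]; apply: (disc_rad o o' r R0 r0).
  by move=> y hy; apply: hR0; apply: ho.
have inner_ge : eps <= sup Sin by apply: sup_upper_bound => //; split; [exact: ltW | exists g].
have ipos : 0 < sup Sin by apply: lt_le_trans inner_ge.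
have hinf : has_inf Sout.
  split; first by exists R0, o'.
  exists 0 => r [o ho].
  have := ho (v 0) (vtx_in 0); rewrite /disc /= => h.
  by apply: le_trans h; exact: dist_ge0.
have hout : inf Sout <= c * sup Sin by rewrite -ler_pdivrMr.
have [r [r0 [o ho]] hr] := sup_adherent (divr_gt0 ipos (ltr0n _ 2)) hsup.
have [R1 [o'' ho''] hR1] := inf_adherent ipos hinf.
exists o, o'', r, R1; split => //.
- have : sup Sin - sup Sin / 2 = sup Sin / 2 by field.
  move=> e; rewrite e in hr; apply: lt_trans hr; exact: divr_gt0.
- have : sup Sin - sup Sin / 2 = sup Sin / 2 by field.
  move=> e; rewrite e in hr.
  have : sup Sin < 2 * r by rewrite -ltr_pdivrMl // mulrC.
  move=> h2.
  have : (c + 1) * sup Sin <= (c + 1) * (2 * r).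
    by apply: ler_wpM2l; [lra | exact: ltW].
  move=> h3; lra.
Qed.

End Poly.

Lemma main_body (c : R) (hc : 1 < c) :
  exists d : R,
    forall (V : seq (pt R)) (p u a b : pt R) (i j : nat),
      convex_polygon V -> fat c V ->
      u != (0, 0) -> a != b ->
      line p u a -> line p u b ->
      polygon_boundary V a -> polygon_boundary V b ->
      (forall x, line p u x -> polygon_boundary V x -> x = a \/ x = b) ->
      (i < size V)%N -> (j < size V)%N ->
      on_edge V i a -> on_edge V j b ->
      Num.min (perim_arc V i a j b) (perim_arc V j b i a) <= d * dist a b.
Proof.
exists (64 * (c + 1) ^+ 2).
move=> V p u a b i j hconv hfat hu hab hla hlb hba hbb hx hi hj hia hjb.
have c0 : 0 < c by apply: lt_trans hc.
have hij : i != j.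
  apply/negP => /eqP e; subst j.
  apply/negP: hab; apply/negPn/eqP; apply: mid_eq; apply: hx.
    case: hla => t1 e1; case: hlb => t2 e2.
    by exists ((t1 + t2) / 2); rewrite e1 e2 /=; congr (_, _); field.
  case: hia => s1 [/andP [s10 s11] e1]; case: hjb => s2 [/andP [s20 s21] e2].
  exists i => //; exists ((s1 + s2) / 2); split.
    by apply/andP; split; lra.
  by rewrite e1 e2 /=; congr (_, _); field.
have [o [o'' [r [R1 [r0 ho ho'' hR1]]]]] := fat_extract V hconv c c0 hfat.
set L := dist a b.
have hu' : 0 < nu (b.1 - a.1, b.2 - a.2) := nu_pos a b hab.
have L0 : 0 < L.
  rewrite lt_neqAle dist_ge0 andbT; apply/negP => /eqP h0.
  by move: hu'; rewrite -dist_nu -/L -h0 expr0n ltxx.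
have R10 : 0 <= R1.
  have oin : polygon_region V o by apply: ho; rewrite /disc /= dist_xx ltW.
  have := ho'' o oin; rewrite /disc /= => h.
  by apply: le_trans h; exact: dist_ge0.
have Zok : forall z : pt R, dist z o = r / 2 ->
   disc z (r / 2) `<=` polygon_region V /\ (forall x, polygon_region V x -> sqd x z <= (2 * R1) ^+ 2).
  move=> z hz; split.
    move=> y hy; apply: ho; rewrite /disc /=.
    apply: (le_trans (dist_tri y z o)); rewrite hz.
    move: hy; rewrite /disc /= => hy; lra.
  have zin : polygon_region V z by apply: ho; rewrite /disc /= hz; lra.
  move=> x hxr; rewrite /sqd -dist_sq.
  have h1 := ho'' x hxr; have h2 := ho'' z zin.
  rewrite /disc /= in h1 h2.
  have h3 : dist x z <= 2 * R1.
    apply: (le_trans (dist_tri x o'' z)); rewrite [dist o'' z]dist_sym; lra.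
  rewrite expr2 [X in _ <= X]expr2; apply: ler_pM => //; exact: dist_ge0.
set u1 := b.1 - a.1; set u2 := b.2 - a.2.
have nuL : u1 ^+ 2 + u2 ^+ 2 = L ^+ 2 by rewrite /L dist_nu.
have hdz : forall sg : R, sg ^+ 2 = 1 ->
   dist (o.1 + sg * (r / 2 * (- u2 / L)), o.2 + sg * (r / 2 * (u1 / L))) o = r / 2.
  move=> sg hs; rewrite /dist /=.
  have -> : (o.1 + sg * (r / 2 * (- u2 / L)) - o.1) ^+ 2 + (o.2 + sg * (r / 2 * (u1 / L)) - o.2) ^+ 2
     = sg ^+ 2 * (r / 2) ^+ 2 * ((u1 ^+ 2 + u2 ^+ 2) / L ^+ 2) by field; rewrite gt_eqF.
  rewrite nuL divff ?mulr1 ?hs ?mul1r; last by rewrite expf_neq0 // gt_eqF.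
  by rewrite sqrtr_sqr ger0_norm // divr_ge0 // ltW.
have hoz : forall sg : R, orient a b (o.1 + sg * (r / 2 * (- u2 / L)), o.2 + sg * (r / 2 * (u1 / L))) =
    orient a b o + sg * (r / 2 * L).
  move=> sg; rewrite /orient /=.
  have -> : r / 2 * L = r / 2 * ((u1 ^+ 2 + u2 ^+ 2) / L) by rewrite nuL; field; rewrite gt_eqF.
  by rewrite /u1 /u2; field; rewrite gt_eqF.
case: (leP 0 (orient a b o)) => hs.
- set z : pt R := (o.1 + 1 * (r / 2 * (- u2 / L)), o.2 + 1 * (r / 2 * (u1 / L))).
  have [hd hR] := Zok z (hdz 1 (expr1n _ _)).
  have hH : r / 2 * dist a b <= orient a b z by rewrite hoz -/L; lra.
  have := chain V hconv z (r / 2) ((2 * R1) ^+ 2) (divr_gt0 r0 (ltr0n _ 2)) hd hR i j a b hi hj hij hia hjb hab hH.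
  move=> h; rewrite ge_min; apply/orP; left.
  exact: (final_ineq c r R1 L _ c0 r0 hR1 (ltW L0) R10 h).
- set z : pt R := (o.1 + (-1) * (r / 2 * (- u2 / L)), o.2 + (-1) * (r / 2 * (u1 / L))).
  have s1 : (-1 : R) ^+ 2 = 1 by rewrite sqrrN expr1n.
  have [hd hR] := Zok z (hdz (-1) s1).
  have hH : r / 2 * dist b a <= orient b a z.
    have -> : orient b a z = - orient a b z by rewrite /orient; ring.
    rewrite hoz dist_sym -/L; lra.
  have hji : j != i by rewrite eq_sym.
  have hba' : b != a by rewrite eq_sym.
  have := chain V hconv z (r / 2) ((2 * R1) ^+ 2) (divr_gt0 r0 (ltr0n _ 2)) hd hR j i b a hj hi hji hjb hia hba' hH.
  rewrite dist_sym -/L => h; rewrite ge_min; apply/orP; right.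
  exact: (final_ineq c r R1 L _ c0 r0 hR1 (ltW L0) R10 h).
Qed.


End Geo.

Local Close Scope classical_set_scope.

Theorem lemma2p2 (R : realType) (c : R) (hc : 1 < c) :
  exists d : R,
    forall (V : seq (pt R)) (p u a b : pt R) (i j : nat),
      convex_polygon V -> fat c V ->
      u != (0, 0) -> a != b ->
      line p u a -> line p u b ->
      polygon_boundary V a -> polygon_boundary V b ->
      (forall x, line p u x -> polygon_boundary V x -> x = a \/ x = b) ->
      (i < size V)%N -> (j < size V)%N ->
      on_edge V i a -> on_edge V j b ->
      Num.min (perim_arc V i a j b) (perim_arc V j b i a) <= d * dist a b.
Proof. exact: main_body. Qed.
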